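(* Let $n\geqslant2$, $i_0,j_0\in\{0,\dots,n\}$, $x_{i_0},y_{j_0}\in\mathbf{Z}$, $\boldsymbol{c}\in\mathbf{Z}^{n+1}$ and $q\geqslant1$. For $(a_i)_{i\neq i_0},(a'_j)_{j\neq j_0}\in(\mathbf{Z}/q\mathbf{Z})^n$ let $\boldsymbol{a}\in(\mathbf{Z}/q\mathbf{Z})^{n+1}$ have coordinates $a_i$ ($i\neq i_0$) and $x_{i_0}\bmod q$ at $i_0$, and $\boldsymbol{a}'$ have coordinates $a'_j$ ($j\neq j_0$) and $y_{j_0}\bmod q$ at $j_0$. Then for every $\eta>0$, \[\sum_{\substack{(a_i)_{i\neq i_0}\in(\mathbf{Z}/q\mathbf{Z})^n\\(a'_j)_{j\neq j_0}\in(\mathbf{Z}/q\mathbf{Z})^n}}|S_q(\boldsymbol{a},\boldsymbol{a}')(\boldsymbol{c})|\ll q^{3+2n+\eta},\] the implied constant depending only on $n$ and $\eta$.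
   Context: $e_q(x)=\exp(2i\pi x/q)$ and $S_q(\boldsymbol{a},\boldsymbol{a}')(\boldsymbol{c})=\sum_{d\in(\mathbf{Z}/q\mathbf{Z})^*}\sum_{\boldsymbol{b}\in(\mathbf{Z}/q\mathbf{Z})^{n+1}}e_q\big(d\sum_ka_ka'_kb_k+\boldsymbol{c}.\boldsymbol{b}\big)$. *)

(* Defs.v *)
From mathcomp Require Import all_boot all_order all_algebra.
From mathcomp Require Import all_classical all_reals all_analysis.
From mathcomp Require Import complex.
Set Implicit Arguments. Unset Strict Implicit. Unset Printing Implicit Defensive.
Import Order.TTheory GRing.Theory Num.Theory.
Local Open Scope ring_scope.
Local Open Scope complex_scope.

(* e_q(k) = exp(2 i pi k / q) = cos(2 pi k / q) + i sin(2 pi k / q),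
   for an integer k (it only depends on k mod q). *)
Definition e_q (R : realType) (q : nat) (k : int) : R[i] :=
  let t : R := (2 * pi * k%:~R / q%:R)%R in (cos t +i* sin t).

(* Residues mod q are represented by 'I_q (values 0..q-1).
   S_q(a,a')(c) = sum_{d in (Z/qZ)^*} sum_{b in (Z/qZ)^(n+1)}
                    e_q(d * sum_k a_k a'_k b_k + c.b).
   (Z/qZ)^* is the set of residues d with gcd(d,q) = 1 (for q = 1 this is {0}). *)
Definition S_q (R : realType) (n q : nat) (a a' : {ffun 'I_n.+1 -> 'I_q})
    (c : 'I_n.+1 -> int) : R[i] :=
  \sum_(d < q | coprime d q)
    \sum_(b : {ffun 'I_n.+1 -> 'I_q})
      e_q R q ((d%:Z * \sum_(k < n.+1) (a k)%:Z * (a' k)%:Z * (b k)%:Z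
               + \sum_(k < n.+1) c k * (b k)%:Z)%R).

(* The sum over (a_i)_{i <> i0} and (a'_j)_{j <> j0} in (Z/qZ)^n of
   |S_q(a,a')(c)|, where a has coordinate x mod q at i0 and a' has
   coordinate y mod q at j0: equivalently, a sum over full vectors a, a'
   in (Z/qZ)^(n+1) whose i0 (resp. j0) coordinate is fixed. *)
Definition sum_abs_S (R : realType) (n q : nat) (i0 j0 : 'I_n.+1) (x y : int)
    (c : 'I_n.+1 -> int) : R :=
  (\sum_(a : {ffun 'I_n.+1 -> 'I_q} | (a i0)%:Z == (x %% q%:Z)%Z)
     \sum_(a' : {ffun 'I_n.+1 -> 'I_q} | (a' j0)%:Z == (y %% q%:Z)%Z)
       complex.Re `|S_q R a a' c|)%R.

(* Main.v *)
Require Import Defs.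
From mathcomp Require Import all_boot all_order all_algebra.
From mathcomp Require Import all_classical all_reals all_analysis.
From mathcomp Require Import complex.
From mathcomp Require Import zify ring lra.
Import Order.TTheory GRing.Theory Num.Theory.
Set Implicit Arguments. Unset Strict Implicit. Unset Printing Implicit Defensive.

Lemma card_inj_bound (T : finType) (P : pred T) (f : T -> nat) (b : nat) :
  {in P &, injective f} -> (forall x, P x -> f x < b) -> #|P| <= b.
Proof.
move=> finj fb; case: b fb => [|b] fb.
  case: (pickP P) => [x Px|P0]; first by have := fb x Px.
  by rewrite eq_card0.
pose g (x : T) : 'I_b.+1 := inord (f x).
have ginj : {in P &, injective g}.
  move=> x y Px Py /(congr1 val); rewrite /g /= !inordK ?fb //.
  exact: finj.
rewrite -(card_in_imset ginj); apply: leq_trans (max_card _) _; by rewrite card_ord.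
Qed.

Lemma sum_bool (T : finType) (P : pred T) : \sum_(i : T) (P i : nat) = #|P|.
Proof.
rewrite -sum1_card [in RHS]big_mkcond /=; apply: eq_bigr => i _; rewrite unfold_in; by case: (P i).
Qed.

Definition tau (q : nat) := #|[pred d : 'I_q | d.+1 %| q]|.

Lemma tau_le (q : nat) : tau q <= q.
Proof. by rewrite /tau -[X in _ <= X]card_ord max_card. Qed.

Lemma pow_bound k e : 0 < k -> e.+1 ^ k <= k ^ k * 2 ^ e.
Proof.
move=> k0; set t := e %/ k.
have e1 : e.+1 <= k * t.+1.
  have := divn_eq e k; have := ltn_pmod e k0; rewrite -/t; nia.
have h1 : t.+1 ^ k <= 2 ^ e.
  apply: (@leq_trans ((2 ^ t) ^ k)); first by rewrite leq_exp2r // ltn_expl.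
  rewrite -expnM; apply: leq_pexp2l => //.
  have := divn_eq e k; rewrite -/t; nia.
apply: (@leq_trans ((k * t.+1) ^ k)); first by rewrite leq_exp2r.
by rewrite expnMn leq_mul2l h1 orbT.
Qed.

Lemma tau_split (p q m : nat) : prime p -> 0 < q -> coprime p m ->
  q = m * p ^ logn p q -> tau q <= (logn p q).+1 * tau m.
Proof.
move=> pp q0 cpm qE; set e := logn p q.
have m0 : 0 < m by move: q0; rewrite qE muln_gt0 => /andP[].
case: m m0 cpm qE => // m' _ cpm qE.
pose lg (d : 'I_q) := logn p d.+1.
pose md (d : 'I_q) := d.+1 %/ p ^ lg d.
have mdE : forall d : 'I_q, d.+1 = md d * p ^ lg d.
  move=> d; rewrite /md divnK //; exact: pfactor_dvdnn.
pose g (d : 'I_q) : 'I_e.+1 * 'I_m'.+1 := (inord (lg d), inord (md d).-1).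
have Hd : forall d : 'I_q, d.+1 %| q -> lg d <= e /\ 0 < md d /\ md d %| m'.+1.
  move=> d dq; split; first exact: dvdn_leq_log.
  have md0 : 0 < md d by move: (ltn0Sn d); rewrite mdE muln_gt0 => /andP[].
  split=> //.
  have : md d %| q by apply: dvdn_trans dq; rewrite mdE dvdn_mulr.
  have [r cr rE] := pfactor_coprime pp (ltn0Sn d).
  have -> : md d = r by rewrite /md /lg {1}rE mulnK ?expn_gt0 ?prime_gt0.
  rewrite qE Gauss_dvdl //; apply: coprimeXr; by rewrite coprime_sym.
have ginj : {in [pred d : 'I_q | d.+1 %| q] &, injective g}.
  move=> d1 d2 /Hd [l1 [m10 m1d]] /Hd [l2 [m20 m2d]] H.
  have E1 := congr1 (fun z => nat_of_ord z.1) H.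
  have E2 := congr1 (fun z => nat_of_ord z.2) H.
  have b1 : (md d1).-1 <= m' by rewrite -ltnS prednK // dvdn_leq.
  have b2 : (md d2).-1 <= m' by rewrite -ltnS prednK // dvdn_leq.
  move: E1 E2; rewrite /= !inordK ?ltnS // => E1 E2.
  apply: val_inj; apply: succn_inj.
  rewrite (mdE d1) (mdE d2) E1; congr (_ * _).
  by rewrite -(prednK m10) -(prednK m20) E2.
rewrite /tau -(card_in_imset ginj).
apply: (@leq_trans #|finset.setX [set: 'I_e.+1] [set x in [pred d : 'I_m'.+1 | d.+1 %| m'.+1]]|).
  apply: subset_leq_card; apply/fintype.subsetP => z /imsetP [d dq ->].
  have [l1 [m10 m1d]] := Hd d dq.
  rewrite !inE /= inordK; first by rewrite prednK.
  by rewrite ltnS -ltnS prednK // dvdn_leq.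
by rewrite cardsX cardsT card_ord cardsE.
Qed.

Lemma tau_bound (k q : nat) : 0 < k -> 0 < q ->
  tau q ^ k <= (k ^ k) ^ (2 ^ k) * q.
Proof.
move=> k0; set P := 2 ^ k.
pose w (q : nat) := #|[pred p : 'I_P | prime p && (p %| q)]|.
have KK : 0 < k ^ k by rewrite expn_gt0 k0.
suff H : forall q, 0 < q -> tau q ^ k <= (k ^ k) ^ (w q) * q.
  move=> q0; apply: leq_trans (H q q0) _; rewrite leq_mul2r; apply/orP; right.
  by apply: leq_pexp2l => //; rewrite /w; apply: leq_trans (max_card _) _; rewrite card_ord.
elim/ltn_ind => {}q IH q0.
case: (ltnP 1 q) => q1; last first.
  have -> : q = 1 by apply/eqP; rewrite eqn_leq q1 q0.
  have : tau 1 <= 1 := tau_le 1.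
  rewrite leq_eqVlt ltnS leqn0 => /orP [/eqP -> | /eqP ->]; first by rewrite exp1n muln1 expn_gt0 KK.
  by rewrite exp0n.
set p := pdiv q.
have pp : prime p by apply: pdiv_prime.
have [m cpm qE] := pfactor_coprime pp q0.
set e := logn p q in qE.
have e0 : 0 < e by rewrite /e logn_gt0 mem_primes pp q0 pdiv_dvd.
have m0 : 0 < m by move: q0; rewrite qE muln_gt0 => /andP[].
have pe2 : 2 <= p ^ e.
  apply: leq_trans (prime_gt1 pp) _; rewrite -{1}(expn1 p); apply: leq_pexp2l => //; exact: prime_gt0.
have mq : m < q by rewrite qE -{1}(muln1 m) ltn_mul2l m0 /=; apply: leq_trans pe2.
have IHm := IH m mq m0.
have ts := tau_split pp q0 cpm qE.
have sub : [pred r : 'I_P | prime r && (r %| m)] \subset [pred r : 'I_P | prime r && (r %| q)].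
  apply/fintype.subsetP => r; rewrite !inE => /andP [-> rm] /=; rewrite qE; exact: dvdn_mulr.
apply: (@leq_trans ((e.+1 ^ k) * ((k ^ k) ^ (w m) * m))).
  apply: (@leq_trans ((e.+1 * tau m) ^ k)); first by rewrite leq_exp2r.
  by rewrite expnMn leq_mul2l IHm orbT.
case: (ltnP p P) => pP.
  have wlt : w m < w q.
    apply: proper_card; apply/properP; split => //.
    exists (Ordinal pP); rewrite !inE /= pp /= ?pdiv_dvd //.
    by rewrite -prime_coprime.
  apply: (@leq_trans ((k ^ k * p ^ e) * ((k ^ k) ^ (w m) * m))).
    rewrite leq_mul2r; apply/orP; right; apply: leq_trans (pow_bound e k0) _.
    by rewrite leq_mul2l leq_exp2r // (prime_gt1 pp) orbT.
  rewrite [in X in _ <= _ * X]qE.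
  apply: (@leq_trans ((k ^ k) ^ (w m).+1 * m * p ^ e)).
    by rewrite expnS; apply: eq_leq; ring.
  by rewrite mulnA !leq_mul2r (leq_pexp2l KK wlt) !orbT.
apply: (@leq_trans (p ^ e * ((k ^ k) ^ (w q) * m))).
  apply: leq_mul.
    apply: (@leq_trans ((2 ^ e) ^ k)); first by rewrite leq_exp2r // ltn_expl.
    by rewrite -expnM mulnC expnM leq_exp2r.
  by rewrite leq_mul2r leq_pexp2l ?orbT // subset_leq_card.
by rewrite qE; apply: eq_leq; ring.
Qed.

Local Open Scope ring_scope.
Lemma lin_count (q : nat) (A c : int) : (0 < q)%N ->
  (#|[pred v : 'I_q | (q%:Z %| (A * v%:Z + c)%R)%Z]| <= gcdn `|A|%N q)%N.
Proof.
move=> q0; set g := gcdn `|A|%N q; set q' := (q %/ g)%N.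
have g0 : (0 < g)%N by rewrite /g gcdn_gt0 q0 orbT.
have qE : q = (q' * g)%N by rewrite /q' divnK // /g dvdn_gcdr.
have q'0 : (0 < q')%N by move: q0; rewrite qE muln_gt0 => /andP[].
apply: (@card_inj_bound _ _ (fun v : 'I_q => (v %/ q')%N)); last first.
  by move=> v _; rewrite ltn_divLR // mulnC -qE.
move=> v1 v2; rewrite !inE => H1 H2 E.
have H : (q%:Z %| A * (v1%:Z - v2%:Z))%Z.
  have -> : A * (v1%:Z - v2%:Z) = (A * v1%:Z + c) - (A * v2%:Z + c) by ring.
  exact: rpredB.
have Hn : (q %| `|A|%N * `|v1%:Z - v2%:Z|%N)%N by move: H; rewrite dvdzE abszM.
have Hq : (q' %| `|v1%:Z - v2%:Z|%N)%N.
  have : (q %| gcdn (`|A|%N * `|v1%:Z - v2%:Z|%N) (q * `|v1%:Z - v2%:Z|%N))%N.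
    by rewrite dvdn_gcd Hn dvdn_mulr.
  by rewrite -muln_gcdl -/g {1}qE mulnC dvdn_pmul2l.
have Hm : (v1 %% q' = v2 %% q')%N.
  have : (v1%:Z == v2%:Z %[mod q'%:Z])%Z by rewrite eqz_mod_dvd dvdzE.
  by rewrite !modz_nat => /eqP [].
apply: val_inj; rewrite /= (divn_eq v1 q') (divn_eq v2 q') E Hm //.
Qed.
Local Close Scope ring_scope.

Lemma gcd_sum (q : nat) : 0 < q -> \sum_(u < q) gcdn u q <= q * tau q.
Proof.
move=> q0.
apply: (@leq_trans (\sum_(u < q) \sum_(D < q) ((D.+1 %| q) && (D.+1 %| u)) * D.+1)).
  apply: leq_sum => u _; set gg := gcdn u q.
  have gg0 : 0 < gg by rewrite /gg gcdn_gt0 q0 orbT.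
  have ggq : gg <= q by apply: dvdn_leq => //; rewrite /gg dvdn_gcdr.
  have hD : gg.-1 < q by rewrite prednK.
  rewrite (bigD1 (Ordinal hD)) //= prednK // /gg dvdn_gcdr dvdn_gcdl /= mul1n.
  exact: leq_addr.
rewrite exchange_big /= /tau -sum_bool big_distrr /=.
apply: leq_sum => D _.
case: (boolP (D.+1 %| q)) => Dq /=; last by rewrite big1 // => u _; rewrite mul0n.
rewrite muln1 -big_distrl /= sum_bool mulnC.
have qE : q = q %/ D.+1 * D.+1 by rewrite divnK.
rewrite [X in _ <= X]qE [X in _ <= X]mulnC leq_mul2l /=.
apply: (@card_inj_bound _ _ (fun u : 'I_q => u %/ D.+1)).
  move=> u1 u2 h1 h2 E; have h1' : D.+1 %| u1 := h1; have h2' : D.+1 %| u2 := h2.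
  apply: (@ord_inj q); by rewrite -[LHS](divnK h1') E (divnK h2').
move=> u _; rewrite ltn_divLR // -qE; case: u => u uq /=; exact uq.
Qed.

Lemma pair_count (q d : nat) (c : int) : 0 < q -> coprime d q ->
  \sum_(u < q) \sum_(v < q) (q%:Z %| (d%:Z * u%:Z * v%:Z + c)%R)%Z <= q * tau q.
Proof.
move=> q0 cdq; apply: leq_trans (gcd_sum q0); apply: leq_sum => u _.
rewrite (sum_bool (fun v : 'I_q => (q%:Z %| (d%:Z * u%:Z * v%:Z + c)%R)%Z)).
apply: leq_trans (lin_count (d%:Z * u%:Z)%R c q0) _.
rewrite abszM !absz_nat mulnC gcdnC Gauss_gcdl; first by rewrite gcdnC.
by rewrite coprime_sym.
Qed.

Local Notation "n %:Z" := (Posz n) : nat_scope.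

Lemma restr_ind (n q : nat) (i0 : 'I_n.+1) (P : 'I_q -> bool) (a : {ffun 'I_n.+1 -> 'I_q}) :
  \prod_(k < n.+1) ((k != i0) || P (a k) : nat) = P (a i0).
Proof.
rewrite (bigD1 i0) //= eqxx /= big1 ?muln1 // => k kn; by rewrite kn.
Qed.

Lemma prod_decomp n q (i0 j0 : 'I_n.+1) (P Q : 'I_q -> bool)
    (delta : 'I_n.+1 -> 'I_q -> 'I_q -> nat) :
  \sum_(a : {ffun 'I_n.+1 -> 'I_q} | P (a i0))
    \sum_(a' : {ffun 'I_n.+1 -> 'I_q} | Q (a' j0)) \prod_(k < n.+1) delta k (a k) (a' k)
  = \prod_(k < n.+1) \sum_(u : 'I_q) \sum_(v : 'I_q)
      ((k != i0) || P u) * ((k != j0) || Q v) * delta k u v.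
Proof.
rewrite (bigA_distr_bigA (fun k u => \sum_(v : 'I_q)
      ((k != i0) || P u) * ((k != j0) || Q v) * delta k u v)) /=.
rewrite big_mkcond /=; apply: eq_bigr => a _.
rewrite (bigA_distr_bigA (fun k v =>
      ((k != i0) || P (a k)) * ((k != j0) || Q v) * delta k (a k) v)) /=.
transitivity (P (a i0) * \sum_(a' : {ffun 'I_n.+1 -> 'I_q} | Q (a' j0)) \prod_(k < n.+1) delta k (a k) (a' k)).
  by case: (P (a i0)); rewrite ?mul1n ?mul0n.
rewrite big_distrr big_mkcond /=; apply: eq_bigr => a' _.
rewrite !big_split /= restr_ind (restr_ind j0 Q a').
by case: (Q (a' j0)); rewrite ?muln0 ?muln1.
Qed.

Lemma prod_le_pow (I : finType) (P : pred I) (F : I -> nat) (K : nat) :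
  (forall i, P i -> F i <= K) -> \prod_(i | P i) F i <= K ^ #|P|.
Proof.
move=> H; apply: leq_trans (leq_prod H) _; apply: eq_leq; exact: (prod_nat_const P K).
Qed.

Lemma prod_S_bound n q t (S : 'I_n.+1 -> nat) (i0 j0 : 'I_n.+1) :
  (1 <= n)%N -> t <= q -> (forall k, S k <= q * t) -> S i0 <= q -> S j0 <= q ->
  (i0 = j0 -> S i0 <= 1) -> \prod_(k < n.+1) S k <= q ^ n.+1 * t ^ n.-1.
Proof.
move=> n1 tq Sk Si Sj Sij.
case: n n1 S i0 j0 Sk Si Sj Sij => // m _ S i0 j0 Sk Si Sj Sij /=.
rewrite (bigD1 i0) //=.
case: (eqVneq i0 j0) => [eij|nij].
  have c1 : #|[pred k : 'I_m.+2 | k != i0]| = m.+1 by rewrite cardC1 card_ord.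
  apply: (@leq_trans (1 * (q * t) ^ m.+1)).
    apply: leq_mul; first exact: Sij.
    apply: leq_trans (@prod_le_pow _ (fun k : 'I_m.+2 => k != i0) S (q * t) (fun k _ => Sk k)) _.
    by rewrite c1.
  rewrite mul1n expnMn !expnS.
  rewrite [X in X <= _](_ : _ = q * q ^ m * t ^ m * t); last by ring.
  rewrite [X in _ <= X](_ : _ = q * q ^ m * t ^ m * q); last by ring.
  by rewrite leq_mul2l tq orbT.
rewrite (bigD1 j0) /=; last by rewrite eq_sym.
have c2 : #|[pred k : 'I_m.+2 | (k != i0) && (k != j0)]| = m.
  have e1 : #|[pred k : 'I_m.+2 | (k != i0) && (k != j0)]| = #|[predD1 [pred k : 'I_m.+2 | k != i0] & j0]|.
    by apply: eq_card => k; rewrite !inE andbC.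
  have e2 : #|[pred k : 'I_m.+2 | k != i0]| = m.+1 by rewrite cardC1 card_ord.
  have e3 : (j0 \in [pred k : 'I_m.+2 | k != i0]) = true by rewrite inE eq_sym.
  have := cardD1 j0 [pred k : 'I_m.+2 | k != i0]; rewrite e2 e3 -e1 /=; lia.
apply: (@leq_trans (q * (q * (q * t) ^ m))).
  apply: leq_mul => //; apply: leq_mul => //.
  apply: leq_trans (@prod_le_pow _ (fun k : 'I_m.+2 => (k != i0) && (k != j0)) S (q * t) (fun k _ => Sk k)) _.
  by rewrite c2.
by rewrite expnMn !expnS; apply: eq_leq; ring.
Qed.

Lemma card_le1_int (q : nat) (xr : int) : #|[pred u : 'I_q | u%:Z == xr]| <= 1.
Proof.
apply: (@card_inj_bound _ _ (fun _ => 0)) => // u1 u2.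
rewrite !inE => /eqP h1 /eqP h2 _; apply: ord_inj; apply/eqP.
by rewrite -eqz_nat h1 h2.
Qed.

Lemma sum_const_ord (N K : nat) : \sum_(i < N) K = N * K.
Proof. by rewrite sum_nat_const card_ord. Qed.

Lemma prod_const_ord (N K : nat) : \prod_(i < N) K = K ^ N.
Proof. by rewrite prod_nat_const card_ord. Qed.

Lemma b_le1 (b : bool) : (b : nat) <= 1.
Proof. by case: b. Qed.

Section Sk.
Variables (n q d : nat) (i0 j0 : 'I_n.+1) (xr yr : int) (c : 'I_n.+1 -> int).
Definition Sk (k : 'I_n.+1) := \sum_(u : 'I_q) \sum_(v : 'I_q)
      ((k != i0) || (u%:Z == xr)) * ((k != j0) || (v%:Z == yr)) *
      (q%:Z %| (d%:Z * u%:Z * v%:Z + c k)%R)%Z.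

Hypotheses (q0 : 0 < q) (cd : coprime d q).

Lemma Sk_gen k : Sk k <= q * tau q.
Proof.
apply: leq_trans (pair_count (c k) q0 cd); apply: leq_sum => u _; apply: leq_sum => v _.
by case: (_ || _); case: (_ || _); rewrite ?mul1n ?mul0n.
Qed.

Lemma Sk_i0 : Sk i0 <= q.
Proof.
apply: (@leq_trans (\sum_(u : 'I_q) \sum_(v < q) ((u%:Z == xr) : nat))).
  apply: leq_sum => u _; apply: leq_sum => v _; rewrite eqxx /=.
  case: (_ == xr); rewrite ?mul0n // mul1n.
  by apply: leq_trans (leq_b1 _); case: (_ || _); rewrite ?mul1n ?mul0n.
under eq_bigr do rewrite sum_const_ord.
rewrite -big_distrr /= (sum_bool (fun u : 'I_q => u%:Z == xr)).
by rewrite -[X in _ <= X]muln1 leq_mul2l card_le1_int orbT.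
Qed.

Lemma Sk_j0 : Sk j0 <= q.
Proof.
apply: (@leq_trans (\sum_(u < q) \sum_(v : 'I_q) ((v%:Z == yr) : nat))).
  apply: leq_sum => u _; apply: leq_sum => v _; rewrite eqxx /=.
  case: (_ == yr); rewrite ?muln0 ?mul0n //.
  by apply: leq_trans (leq_b1 _); case: (_ || _); rewrite ?mul1n ?mul0n.
under eq_bigr do rewrite (sum_bool (fun v : 'I_q => v%:Z == yr)).
apply: (@leq_trans (\sum_(u < q) 1)); first by apply: leq_sum => u _; exact: card_le1_int.
by rewrite sum_const_ord muln1.
Qed.

Lemma Sk_i0j0 : i0 = j0 -> Sk i0 <= 1.
Proof.
move=> eij.
apply: (@leq_trans (\sum_(u : 'I_q) \sum_(v : 'I_q) ((u%:Z == xr) * (v%:Z == yr)))).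
  apply: leq_sum => u _; apply: leq_sum => v _; rewrite -eij eqxx /=.
  case: (_ == xr); case: (_ == yr); rewrite ?muln0 ?mul0n ?mul1n //.
  exact: leq_b1.
under eq_bigr do rewrite -big_distrr /= (sum_bool (fun v : 'I_q => v%:Z == yr)).
rewrite -big_distrl /= (sum_bool (fun u : 'I_q => u%:Z == xr)).
by rewrite -(muln1 1) leq_mul // card_le1_int.
Qed.
End Sk.

Lemma main_count n q (i0 j0 : 'I_n.+1) (xr yr : int) (c : 'I_n.+1 -> int) :
  1 <= n -> 0 < q ->
  \sum_(a : {ffun 'I_n.+1 -> 'I_q} | (a i0)%:Z == xr)
     \sum_(a' : {ffun 'I_n.+1 -> 'I_q} | (a' j0)%:Z == yr)
     \sum_(d < q | coprime d q) \prod_(k < n.+1)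
     (q * (q%:Z %| (d%:Z * (a k)%:Z * (a' k)%:Z + c k)%R)%Z)
  <= q ^ (3 + 2 * n) * tau q ^ n.-1.
Proof.
move=> n1 q0.
under eq_bigr do rewrite exchange_big /=.
rewrite exchange_big /=.
apply: (@leq_trans (\sum_(d < q | coprime d q) (q ^ n.+1 * (q ^ n.+1 * tau q ^ n.-1)))).
  apply: leq_sum => d cd.
  under eq_bigr do under eq_bigr do rewrite big_split /= prod_const_ord.
  under eq_bigr do rewrite -big_distrr /=.
  rewrite -big_distrr /= leq_mul2l; apply/orP; right.
  rewrite (prod_decomp i0 j0 (fun u : 'I_q => u%:Z == xr) (fun v : 'I_q => v%:Z == yr)
     (fun k u v => (q%:Z %| (d%:Z * u%:Z * v%:Z + c k)%R)%Z)).
  apply: (@prod_S_bound n q (tau q) (Sk q d i0 j0 xr yr c)) => //.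
  - exact: tau_le.
  - by move=> k; apply: Sk_gen.
  - exact: Sk_i0.
  - exact: Sk_j0.
  - exact: Sk_i0j0.
rewrite big_mkcond /=.
apply: (@leq_trans (\sum_(d < q) (q ^ n.+1 * (q ^ n.+1 * tau q ^ n.-1)))).
  by apply: leq_sum => d _; case: (coprime d q).
rewrite sum_const_ord.
have -> : 3 + 2 * n = (n.+1 + n.+1).+1 by lia.
by rewrite (expnS q (n.+1 + n.+1)) expnD; apply: eq_leq; ring.
Qed.

Local Open Scope ring_scope.
Local Open Scope complex_scope.
Section PA.
Variable R : realType.

Lemma e_qD (q : nat) (a b : int) : e_q R q (a + b) = e_q R q a * e_q R q b.
Proof.
rewrite /e_q intrD mulrDr mulrDl cosD sinD.
by apply/eqP; rewrite eq_complex /= eqxx addrC eqxx.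
Qed.

Lemma e_q0 (q : nat) : e_q R q 0 = 1.
Proof. by rewrite /e_q mulr0 mul0r cos0 sin0. Qed.

Lemma e_qMn (q : nat) (m : int) (b : nat) : e_q R q (m * b%:Z) = e_q R q m ^+ b.
Proof.
elim: b => [|b IH]; first by rewrite mulr0 e_q0 expr0.
by rewrite -addn1 PoszD mulrDr e_qD IH mulr1 exprD expr1.
Qed.

Lemma e_q_q (q : nat) : (0 < q)%N -> e_q R q q%:Z = 1.
Proof.
move=> q0; rewrite /e_q.
have -> : (2 * pi * (q%:Z)%:~R / q%:R : R) = pi *+ 2.
  rewrite (_ : (q%:Z)%:~R = q%:R :> R) // -mulrA mulfV ?pnatr_eq0 -?lt0n // mulr1 mulrC mulr_natr //.
by rewrite cos2pi sin2pi.
Qed.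

Lemma e_q_mulq (q : nat) (z : int) : (0 < q)%N -> e_q R q (z * q%:Z) = 1.
Proof.
move=> q0.
have Hn : forall n : nat, e_q R q (n%:Z * q%:Z) = 1.
  by move=> n; rewrite mulrC e_qMn e_q_q // expr1n.
case: z => [n|n]; first exact: Hn.
have := e_qD q (Negz n * q%:Z) (n.+1%:Z * q%:Z).
by rewrite -mulrDl NegzE addNr mul0r e_q0 Hn mulr1 => <-.
Qed.

Lemma e_q_mod (q : nat) (m : int) : (0 < q)%N -> e_q R q m = e_q R q (m %% q%:Z)%Z.
Proof.
move=> q0; rewrite {1}(divz_eq m q%:Z) e_qD e_q_mulq // mul1r //.
Qed.

Lemma e_q_eq1 (q : nat) (m : int) : (0 < q)%N -> e_q R q m = 1 -> (q%:Z %| m)%Z.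
Proof.
move=> q0; rewrite e_q_mod //.
have qz0 : q%:Z != 0 by rewrite eqz_nat -lt0n.
set r := (m %% q%:Z)%Z.
have r0 : 0 <= r by apply: modz_ge0.
have rq : r < q%:Z by apply: ltz_pmod; rewrite ltz_nat.
move=> H; apply/dvdz_mod0P; rewrite -/r.
apply/eqP; rewrite eq_le r0 andbT; apply/negP => /negP; rewrite -ltNge => rpos.
have qR : (0 : R) < q%:R by rewrite ltr0n.
set s : R := pi * r%:~R / q%:R.
have s0 : 0 < s by rewrite /s divr_gt0 // mulr_gt0 ?pi_gt0 // ltr0z.
have spi : s < pi.
  rewrite /s ltr_pdivrMr // ltr_pM2l ?pi_gt0 //.
  by rewrite (_ : q%:R = (q%:Z)%:~R :> R) // ltr_int.
have sin0 : 0 < sin s by apply: sin_gt0_pi; rewrite s0 spi.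
have : complex.Re (e_q R q r) = 1 by rewrite H.
rewrite /e_q /=.
have -> : (2 * pi * r%:~R / q%:R : R) = s + s by rewrite /s; ring.
rewrite cosD => E2.
have := cos2Dsin2 s; rewrite !expr2 => E.
have : sin s * sin s > 0 by apply: mulr_gt0.
lra.
Qed.

Lemma G_sum (q : nat) (m : int) : (0 < q)%N ->
  \sum_(j < q) e_q R q m ^+ j = (q * (q%:Z %| m)%Z)%:R.
Proof.
move=> q0; case: (boolP (q%:Z %| m)%Z) => H.
  rewrite -(divzK H) e_q_mulq //.
  under eq_bigr do rewrite expr1n.
  by rewrite sumr_const card_ord muln1.
have w1 : e_q R q m != 1 by apply/negP => /eqP /(@e_q_eq1 q m q0); rewrite (negbTE H).
have := subrX1 (e_q R q m) q.
rewrite -e_qMn e_q_mulq // subrr => /esym /eqP; rewrite mulf_eq0 subr_eq0 (negbTE w1) /=.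
by move/eqP => ->; rewrite muln0.
Qed.

Lemma S_qE (n q : nat) (a a' : {ffun 'I_n.+1 -> 'I_q}) (c : 'I_n.+1 -> int) :
  (0 < q)%N ->
  S_q R a a' c = (\sum_(d < q | coprime d q) \prod_(k < n.+1)
     (q * (q%:Z %| (d%:Z * (a k)%:Z * (a' k)%:Z + c k)%R)%Z)%N)%:R.
Proof.
move=> q0; rewrite natr_sum /S_q; apply: eq_bigr => d _; rewrite natr_prod.
transitivity (\sum_(b : {ffun 'I_n.+1 -> 'I_q})
   \prod_(k < n.+1) e_q R q (d%:Z * (a k)%:Z * (a' k)%:Z + c k) ^+ (b k)).
  apply: eq_bigr => b _.
  rewrite mulr_sumr -big_split /= (big_morph (e_q R q) (e_qD q) (e_q0 q)).
  by apply: eq_bigr => k _; rewrite -e_qMn; congr e_q; ring.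
rewrite -(bigA_distr_bigA (fun (k : 'I_n.+1) (j : 'I_q) =>
   e_q R q (d%:Z * (a k)%:Z * (a' k)%:Z + c k) ^+ j)) /=.
by apply: eq_bigr => k _; rewrite G_sum.
Qed.

Lemma sum_abs_SE (n q : nat) (i0 j0 : 'I_n.+1) (x y : int) (c : 'I_n.+1 -> int) :
  (0 < q)%N ->
  @sum_abs_S R n q i0 j0 x y c =
  (\sum_(a : {ffun 'I_n.+1 -> 'I_q} | (a i0)%:Z == (x %% q%:Z)%Z)
     \sum_(a' : {ffun 'I_n.+1 -> 'I_q} | (a' j0)%:Z == (y %% q%:Z)%Z)
     \sum_(d < q | coprime d q) \prod_(k < n.+1)
     (q * (q%:Z %| (d%:Z * (a k)%:Z * (a' k)%:Z + c k)%R)%Z)%N)%:R.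
Proof.
move=> q0; rewrite /sum_abs_S natr_sum; apply: eq_bigr => a _.
rewrite natr_sum; apply: eq_bigr => a' _.
by rewrite S_qE // normr_nat raddfMn.
Qed.
End PA.
Local Close Scope complex_scope.

Local Open Scope ring_scope.
Unset Implicit Arguments.

Theorem mainTheorem4 (R : realType) :
  forall n : nat, (2 <= n)%N ->
  forall eta : R, 0 < eta ->
  exists C : R, 0 < C /\
    forall (i0 j0 : 'I_n.+1) (x y : int) (c : 'I_n.+1 -> int) (q : nat),
      (1 <= q)%N ->
      @sum_abs_S R n q i0 j0 x y c
        <= C * (q%:R `^ ((3 + 2 * n)%:R + eta)).
Proof.
move=> n n2 eta eta0.
set m := Num.Def.archi_bound (eta^-1).
have hm : eta^-1 < m%:R by apply: archi_boundP; rewrite invr_ge0 ltW.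
have m0 : (0 < m)%N by rewrite -(ltr0n R); apply: lt_trans hm; rewrite invr_gt0.
have meta : 1 <= eta * m%:R.
  have : eta * eta^-1 <= eta * m%:R by rewrite ler_pM2l // ltW.
  by rewrite mulfV // lt0r_neq0.
set K := (n.-1 * m)%N.
have K0 : (0 < K)%N by rewrite /K muln_gt0 m0 andbT -subn1 subn_gt0.
set M := ((K ^ K) ^ (2 ^ K))%N.
have M0 : (0 < M)%N by rewrite /M !expn_gt0 K0.
exists M%:R; split; first by rewrite ltr0n.
move=> i0 j0 x y c q q1.
rewrite sum_abs_SE //.
have qR : (1 : R) <= q%:R by rewrite ler1n.
have qR0 : (0 : R) <= q%:R by apply: le_trans qR.
apply: (@le_trans _ _ ((q ^ (3 + 2 * n) * tau q ^ n.-1)%N%:R)).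
  rewrite ler_nat; apply: main_count => //; exact: leq_trans n2.
rewrite natrM natrX powRD; last by rewrite pnatr_eq0 -lt0n q1 implybT.
rewrite powR_mulrn // mulrCA ler_wpM2l ?exprn_ge0 //.
set X : R := (tau q)%:R ^+ n.-1.
set Y : R := M%:R * q%:R `^ eta.
have X0 : 0 <= X by rewrite /X exprn_ge0.
have Y0 : 0 <= Y by rewrite /Y mulr_ge0 ?powR_ge0.
rewrite natrX -/X.
rewrite -(ler_pXn2r m0) ?nnegrE //.
apply: (@le_trans _ _ (M%:R * q%:R)).
  rewrite /X -exprM -natrX -natrM ler_nat.
  exact: tau_bound.
rewrite /Y exprMn; apply: ler_pM => //.
  by rewrite -natrX ler_nat; have := leq_pexp2l M0 m0; rewrite expn1.
rewrite -powR_mulrn ?powR_ge0 // -powRrM.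
rewrite -{1}(powRr1 qR0); exact: ler_powR.
Qed.
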